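(* Let $m\geq 3$ and $n\geq 2$ be integers, let $C_m$ be the cycle of order $m$ and $H_n$ a graph of order $n$. Then $rvc(C_m\diamond H_n)=1$ if $m=3$, and $rvc(C_m\diamond H_n)=\lceil m/2\rceil$ if $m\geq 4$.
   Context: All graphs are finite, simple, connected and undirected. A rainbow vertex $k$-coloring of $G$ is a map $c:V(G)\to\{1,\dots,k\}$ such that every two vertices are joined by a path whose internal vertices all receive distinct colors; $rvc(G)$ is the least $k$ for which $G$ has one. For graphs $G_m$ (order $m$) and $H_n$ (order $n$) on disjoint vertex sets, the edge corona $G_m\diamond H_n$ is obtained from one copy of $G_m$ and $|E(G_m)|$ vertex-disjoint copies of $H_n$, one per edge of $G_m$, by joining both end vertices of the $j$-th edge of $G_m$ to every vertex of the $j$-th copy of $H_n$. *)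

(* Defs.v *)
From mathcomp Require Import all_boot.
Set Implicit Arguments. Unset Strict Implicit. Unset Printing Implicit Defensive.

Definition simple_graph (T : finType) (e : rel T) : Prop :=
  symmetric e /\ irreflexive e.

Definition connected_graph (T : finType) (e : rel T) : Prop :=
  forall x y : T, connect e x y.

Definition rainbow_vertex_coloring (T : finType) (e : rel T) (k : nat)
  (c : T -> 'I_k) : Prop :=
  forall x y : T, x != y ->
    exists q : seq T, path e x (rcons q y) && uniq (map c q).

Definition is_rvc (T : finType) (e : rel T) (k : nat) : Prop :=
  (exists c : T -> 'I_k, rainbow_vertex_coloring e c) /\
  (forall k' (c : T -> 'I_k'), rainbow_vertex_coloring e c -> k <= k').

Definition cycle_rel (m : nat) : rel 'I_m :=
  fun x y => (y == (x.+1 %% m) :> nat) || (x == (y.+1 %% m) :> nat).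

Arguments cycle_rel m : clear implicits.

Definition is_edge (T : finType) (e : rel T) (A : {set T}) : bool :=
  [exists x, exists y, e x y && (A == [set x; y])].

Definition edge_type (T : finType) (e : rel T) := {A : {set T} | is_edge e A}.

(* Vertex set of the edge corona G <> H: vertices of G, plus one copy of H
   per edge of G. *)
Definition corona_vertex (T U : finType) (e : rel T) : finType :=
  (T + (edge_type e * U))%type.

Definition edge_corona_rel (T U : finType) (e : rel T) (h : rel U)
  : rel (corona_vertex U e) :=
  fun v w =>
    match v, w with
    | inl x, inl y => e x y
    | inl x, inr (A, _) => x \in val A
    | inr (A, _), inl y => y \in val A
    | inr (A, u), inr (B, u') => (A == B) && h u u'
    end.

Arguments edge_corona_rel {T U} e h.

(* Main.v *)
Require Import Defs.
From mathcomp Require Import all_boot.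
From mathcomp Require Import zify.
Set Implicit Arguments. Unset Strict Implicit. Unset Printing Implicit Defensive.

Section Corona.
Variable m : nat.
Hypothesis m3 : 3 <= m.
Variables (U : finType) (h : rel U).
Hypothesis hsym : symmetric h.

Local Notation e := (cycle_rel m).
Local Notation T := (corona_vertex U e).
Local Notation E := (edge_corona_rel e h).

Lemma m_gt0 : 0 < m. Proof. by apply: leq_trans m3. Qed.
Definition node (j : nat) : 'I_m := Ordinal (ltn_pmod j m_gt0).
Lemma node_val (z : 'I_m) : node z = z.
Proof. by apply: val_inj; rewrite /= modn_small. Qed.
Lemma node_addm j : node (j + m) = node j.
Proof. by apply: val_inj; rewrite /= modnDr. Qed.

Lemma cycle_node j : e (node j) (node j.+1).
Proof. by rewrite /cycle_rel /= -[(j %% m).+1]addn1 modnDml addn1 eqxx. Qed.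

Lemma e_sym : symmetric e.
Proof. by move=> x y; rewrite /cycle_rel orbC. Qed.

Lemma e_inv z z' : e z z' -> z' = node z.+1 \/ z = node z'.+1.
Proof. by case/orP => /eqP H; [left|right]; apply: val_inj; rewrite /= H. Qed.

Lemma E_sym : symmetric E.
Proof.
move=> [x|[A u]] [y|[B v]] //=; first exact: e_sym.
by rewrite eq_sym hsym.
Qed.

Lemma edge_char (C : edge_type e) :
  exists c, (c < m) && (val C == [set node c; node c.+1]).
Proof.
case: C => A /= /existsP [x /existsP [y /andP [exy /eqP ->]]].
case: (e_inv exy) => ->.
  by exists x; rewrite ltn_ord node_val eqxx.
by exists y; rewrite ltn_ord node_val setUC eqxx.
Qed.

Definition lo C := @xchoose nat (fun c => (c < m) && (val C == [set node c; node c.+1])) (edge_char C).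
Lemma lo_spec C : (lo C < m) && (val C == [set node (lo C); node (lo C).+1]).
Proof. exact: (xchooseP (edge_char C)). Qed.
Lemma in_edge (C : edge_type e) (z : 'I_m) : (z \in val C) = (z == node (lo C)) || (z == node (lo C).+1).
Proof. case/andP: (lo_spec C) => _ /eqP HC. by rewrite -[z \in val C]/(z \in (val C : {set _})) HC in_set2. Qed.
Lemma lo_in (C : edge_type e) : node (lo C) \in val C.
Proof. by rewrite in_edge eqxx. Qed.
Lemma lo_in1 (C : edge_type e) : node (lo C).+1 \in val C.
Proof. by rewrite in_edge eqxx orbT. Qed.

Lemma edge_node j : is_edge e [set node j; node j.+1].
Proof.
apply/existsP; exists (node j); apply/existsP; exists (node j.+1).
by rewrite cycle_node eqxx.
Qed.
Definition edg j : edge_type e := exist (fun A => is_edge e A) _ (edge_node j).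
Lemma in_edg j z : (z \in val (edg j)) = (z == node j) || (z == node j.+1).
Proof. by rewrite /= in_set2. Qed.

Lemma edge_eq (A B : edge_type e) : val A = val B -> A = B.
Proof.
case: A => A pA; case: B => B pB /= eAB.
by subst; rewrite (bool_irrelevance pA pB).
Qed.

Definition K := if m == 3 then 1 else m.+1 %/ 2.
Lemma K_gt0 : 0 < K.
Proof. rewrite /K; case: ifP => // _; lia. Qed.

Definition col0 (v : T) : 'I_K :=
  match v with inl z => Ordinal (ltn_pmod z K_gt0) | inr _ => Ordinal K_gt0 end.

Fixpoint arc s w : seq T := if w is w'.+1 then inl (node s) :: arc s.+1 w' else [::].

Lemma L1 s w v : E (inl (node (s + w))) v -> path E (inl (node s)) (rcons (arc s.+1 w) v).
Proof.
elim: w s => [|w IH] s /=; first by rewrite addn0 => ->.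
move=> H; rewrite cycle_node /=; apply: IH; by rewrite addSnnS.
Qed.

Lemma L2 v s w : E v (inl (node s)) -> path E v (rcons (arc s w) (inl (node (s + w)))).
Proof.
case: w => [|w] H /=; first by rewrite addn0 H.
rewrite H /=; apply: L1 => /=; rewrite addnS; exact: cycle_node.
Qed.

Lemma arc_col s w : [seq val (col0 v) | v <- arc s w] = [seq t %% m %% K | t <- iota s w].
Proof. by elim: w s => //= w IH s; rewrite IH. Qed.

Lemma mod2 x d : x < d.*2 -> x %% d = if x < d then x else x - d.
Proof.
move=> lt; case: (ltnP x d) => [/modn_small //|le_dx].
rewrite -{1}(subnKC le_dx) modnDl modn_small //; try split; lia.
Qed.

Lemma col_inj s w a b : w <= m %/ 2 -> a \in iota s w -> b \in iota s w ->
  a %% m %% K = b %% m %% K -> a = b.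
Proof.
move=> hw; rewrite !mem_iota => /andP[sa aw] /andP[sb bw].
wlog ab : a b sa aw sb bw / a <= b.
  move=> W; case: (leqP a b) => [|/ltnW] ab H; first exact: W ab H.
  by symmetry; apply: W ab (esym H).
rewrite /K; case: ifP => [/eqP m3e|m3n].
  move: hw; rewrite m3e /= => hw; try split; lia.
have -> : b = a + (b - a) by lia.
rewrite -modnDml.
have ha' : a %% m < m by exact: ltn_pmod m_gt0.
move: (a %% m) ha' => a' ha'.
have hd : b - a < m %/ 2 by lia.
move: (b - a) hd => d hd.
rewrite (mod2 (x:=a' + d) (d:=m)); last by lia.
have Hm := m3.
case: ltnP => h1; rewrite !(mod2 (d := m.+1 %/ 2)); try lia;
 repeat case: ifP; try split; lia.
Qed.

Lemma arc_uniq s w : w <= m %/ 2 -> uniq (map col0 (arc s w)).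
Proof.
move=> hw; apply: (@map_uniq _ _ val); rewrite -map_comp.
rewrite (@eq_map _ _ _ (fun v => val (col0 v))) // arc_col.
rewrite map_inj_in_uniq ?iota_uniq // => a b ha hb; exact: col_inj ha hb.
Qed.

Definition good (x y : T) := exists q, path E x (rcons q y) && uniq (map col0 q).

Lemma good_sym x y : good x y -> good y x.
Proof.
case=> q /andP [p u]; exists (rev q); rewrite map_rev rev_uniq u andbT.
have := rev_path E x (rcons q y); rewrite last_rcons belast_rcons rev_cons => ->.
by rewrite (@eq_path _ _ E) // => a b; exact: E_sym.
Qed.

Lemma Ga s w : 0 < w -> w <= (m %/ 2).+1 -> good (inl (node s)) (inl (node (s + w))).
Proof.
move=> w0 hw; exists (arc s.+1 w.-1); rewrite L1 ?arc_uniq //; first lia.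
rewrite /=; have -> : s + w = (s + w.-1).+1 by lia.
exact: cycle_node.
Qed.

Lemma Gb s w (C : edge_type e) (x : U) : node (s + w) \in val C -> w <= m %/ 2 -> good (inl (node s)) (inr (C, x)).
Proof. by move=> hC hw; exists (arc s.+1 w); rewrite L1 ?arc_uniq. Qed.

Lemma Gb' s w (C : edge_type e) (x : U) : node s \in val C -> w <= m %/ 2 -> good (inr (C, x)) (inl (node (s + w))).
Proof. by move=> hC hw; exists (arc s w); rewrite L2 ?arc_uniq. Qed.

Lemma Gc s w (A B : edge_type e) (u v : U) : node s \in val A -> node (s + w) \in val B -> w < m %/ 2 ->
  good (inr (A, u)) (inr (B, v)).
Proof.
move=> hA hB hw; exists (arc s w.+1).
rewrite (_ : rcons (arc s w.+1) _ = inl (node s) :: rcons (arc s.+1 w) (inr (B, v))) //.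
rewrite /= hA L1 //=; by move: (@arc_uniq s w.+1 hw).
Qed.

Lemma good_ll (a b : 'I_m) : a != b -> good (inl a) (inl b).
Proof.
wlog ab : a b / a < b.
  move=> W; rewrite neq_ltn => /orP [ab|ba].
    by apply: W => //; rewrite neq_ltn ab.
  by apply: good_sym; apply: W => //; rewrite neq_ltn ba.
move=> _; have hb := ltn_ord b; have ha := ltn_ord a.
case: (leqP (b - a) (m %/ 2).+1) => hd.
  have := @Ga a (b - a); rewrite subnKC ?(ltnW ab) // !node_val; apply; try split; lia.
apply: good_sym.
have := @Ga b (a + m - b); have -> : b + (a + m - b) = a + m by lia.
rewrite node_addm !node_val; apply; try split; lia.
Qed.

Lemma good_lr (a : 'I_m) (B : edge_type e) v : good (inl a) (inr (B, v)).
Proof.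
have hc : lo B < m by case/andP: (lo_spec B).
have h0 := lo_in B; have h1 := lo_in1 B.
have ha := ltn_ord a.
case: (leqP (nat_of_ord a) (lo B)) => ac.
  case: (leqP (lo B - a) (m %/ 2)) => hd.
    rewrite -(node_val a); apply: (@Gb _ (lo B - a)) => //.
    by rewrite subnKC.
  apply: good_sym; have := @Gb' (lo B).+1 (a + m - (lo B).+1) B v h1.
  rewrite subnKC; last lia.
  rewrite node_addm node_val; apply; try split; lia.
case: (leqP (lo B + m - a) (m %/ 2)) => hd.
  rewrite -(node_val a); apply: (@Gb _ (lo B + m - a)) => //.
  by rewrite subnKC ?node_addm //; try split; lia.
apply: good_sym; have := @Gb' (lo B).+1 (a - (lo B).+1) B v h1.
rewrite subnKC // node_val; apply; try split; lia.
Qed.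

Lemma good_rr (A B : edge_type e) u v : inr (A, u) != inr (B, v) :> T ->
  good (inr (A, u)) (inr (B, v)).
Proof.
case: (eqVneq A B) => [<-|AB] neq.
  have uv : u != v by apply: contraNneq neq => ->.
  exists [:: inl (node (lo A))] => /=.
  by rewrite lo_in.
have lab : lo A != lo B.
  apply: contraNneq AB => lab.
  case/andP: (lo_spec A) => _ /eqP HA; case/andP: (lo_spec B) => _ /eqP HB.
  have : val A = val B by rewrite HA HB lab.
  clear neq; move: lab HA HB; case: A => A pA; case: B => B pB /= _ _ _ eAB.
  by subst; rewrite (bool_irrelevance pA pB).
move: lab; clear neq.
wlog ab : A B u v AB / lo A < lo B.
  move=> W; rewrite neq_ltn => /orP [ab|ba].
    by apply: W => //; rewrite neq_ltn ab.
  by apply: good_sym; apply: W => //; [rewrite eq_sym | rewrite neq_ltn ba].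
move=> _.
have ha : lo A < m by case/andP: (lo_spec A).
have hb : lo B < m by case/andP: (lo_spec B).
case: (ltnP (lo B - (lo A).+1) (m %/ 2)) => hd.
  apply: (@Gc (lo A).+1 (lo B - (lo A).+1)) => //; first exact: lo_in1.
  by rewrite subnKC // lo_in.
apply: good_sym.
apply: (@Gc (lo B).+1 (lo A + m - (lo B).+1)); first exact: lo_in1.
  by rewrite subnKC ?node_addm ?lo_in //; try split; lia.
lia.
Qed.

Lemma upper : rainbow_vertex_coloring E col0.
Proof.
move=> [a|[A u]] [b|[B v]] neq.
- by apply: good_ll; apply: contraNneq neq => ->.
- exact: good_lr.
- exact: good_sym (good_lr _ _ _).
- exact: good_rr.
Qed.

Definition off (i : nat) (z : 'I_m) := (z + (m - i)) %% m.
Lemma off_lt i z : off i z < m.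
Proof. exact: ltn_pmod _ m_gt0. Qed.
Lemma off_node i t : i <= m -> off i (node (i + t)) = t %% m.
Proof.
move=> hi; rewrite /off /= modnDml.
have -> : i + t + (m - i) = t + m by lia.
by rewrite modnDr.
Qed.
Lemma off_node0 i : i <= m -> off i (node i) = 0.
Proof.
by move=> hi; rewrite /off /= modnDml subnKC // modnn.
Qed.
Lemma off_inv i z t : i <= m -> off i z = t -> z = node (i + t).
Proof.
move=> hi H; apply: val_inj => /=; rewrite -H /off modnDmr.
have -> : i + (z + (m - i)) = z + m by lia.
by rewrite modnDr modn_small.
Qed.
Lemma off_succ i (z : nat) : off i (node z.+1) = (off i (node z)).+1 %% m.
Proof.
rewrite /off /= [in LHS]modnDml.
rewrite -[in RHS]addn1 modnDml -addnA modnDml.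
congr (_ %% m); try split; lia.
Qed.

Definition Glip (G : nat -> nat) :=
  forall o, o < m -> G o <= G (o.+1 %% m) + 1 /\ G (o.+1 %% m) <= G o + 1.

Lemma Glip_e G i z z' : Glip G -> e z z' ->
  G (off i z) <= G (off i z') + 1 /\ G (off i z') <= G (off i z) + 1.
Proof.
move=> HG ezz'; case: (e_inv ezz') => ->; rewrite off_succ node_val.
  exact: HG (off_lt _ _).
by have [] := HG _ (off_lt i z'); split.
Qed.

Definition pot (G : nat -> nat) (i : nat) (S : edge_type e) (v : T) : nat :=
  match v with
  | inl z => G (off i z)
  | inr (C, _) => if C == S then 0
       else (minn (G (off i (node (lo C)))) (G (off i (node (lo C).+1)))).+1
  end.

Definition Lip (F : T -> nat) := forall u v, E u v -> F u <= F v + 1 /\ F v <= F u + 1.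

Lemma pot_lip G i (S : edge_type e) : Glip G -> (forall z, z \in val S -> G (off i z) = 1) ->
  Lip (pot G i S).
Proof.
move=> HG HS.
have key : forall (C : edge_type e) (w : U) z, z \in val C ->
    G (off i z) <= pot G i S (inr (C, w)) + 1 /\ pot G i S (inr (C,w)) <= G (off i z) + 1.
  move=> C w z zC /=; case: eqP => [CS|_].
    by subst; rewrite HS.
  have [l1 l2] := Glip_e i HG (cycle_node (lo C)).
  move: zC; rewrite in_edge => /orP [] /eqP ->; try split; lia.
move=> u v; case: u => [z|[C w]]; case: v => [z'|[C' w']].
- exact: Glip_e.
- by move=> zC; exact: key.
- by move=> zC; have [] := key _ w _ zC; split.
- by case/andP => /eqP <- _ /=; try split; lia.
Qed.

Lemma path_pot (X : Type) (R : rel X) (F : X -> nat) x s :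
  (forall u v, R u v -> F u <= F v + 1 /\ F v <= F u + 1) -> path R x s ->
  F (last x s) <= F x + size s /\ F x <= F (last x s) + size s.
Proof.
move=> HF; elim: s x => [|a s IH] x /=; first by rewrite !addn0.
case/andP=> xa pa; have [h1 h2] := HF _ _ xa; have [i1 i2] := IH a pa; split; lia.
Qed.

Lemma path_pot_nth (X : Type) (R : rel X) (F : X -> nat) x s t :
  (forall u v, R u v -> F u <= F v + 1 /\ F v <= F u + 1) -> path R x s -> t < size s ->
  F (nth x s t) <= F x + t.+1 /\ F (nth x s t) <= F (last x s) + (size s - t.+1).
Proof.
move=> HF; elim: s x t => [|a s IH] x t //= /andP [xa pa] ht.
have [h1 h2] := HF _ _ xa.
case: t ht => [|t] ht /=.
  have [i1 i2] := path_pot HF pa; split; lia.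
have [i1 i2] := IH a t pa ht.
rewrite (set_nth_default a x); last by lia.
split; lia.
Qed.

Lemma uniq_ord_size k (s : seq 'I_k) : uniq s -> size s <= k.
Proof. move=> u; rewrite -(card_uniqP u); apply: leq_trans (max_card _) _; by rewrite card_ord. Qed.

Lemma uniq_size k (c : T -> 'I_k) q : uniq (map c q) -> size q <= k.
Proof. by move=> u; rewrite -(size_map c); exact: uniq_ord_size. Qed.

Definition hh := m %/ 2.
Definition GA o := (if o <= 1 then 0 else minn o.-1 (m - o)).+1.
Definition GB o := (if o <= hh then minn (hh - o) (o + m - hh - 1)
                    else minn (o - hh - 1) (m - o + hh)).+1.

Lemma Glip_gen G : (forall o, o.+1 < m -> G o <= G o.+1 + 1 /\ G o.+1 <= G o + 1) ->
  (G (m.-1) <= G 0 + 1 /\ G 0 <= G m.-1 + 1) -> Glip G.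
Proof.
move=> H1 H2 o ho; case: (ltnP o.+1 m) => h1.
  by rewrite modn_small //; exact: H1.
have -> : o = m.-1 by lia.
have -> : m.-1.+1 = m by lia.
by rewrite modnn.
Qed.

Lemma GA_lip : Glip GA.
Proof.
have Hm := m3.
by apply: Glip_gen; [move=> o ho|]; rewrite /GA /=; repeat case: ifP; try split; lia.
Qed.

Lemma GB_lip : Glip GB.
Proof.
have Hm := m3.
by apply: Glip_gen; [move=> o ho|]; rewrite /GB /hh /=; repeat case: ifP; try split; lia.
Qed.

Lemma sum_ge o : m %% 2 = 1 -> o < m -> hh.+1 <= GA o + GB o.
Proof.
have Hm := m3.
by move=> mo ho; rewrite /GA /GB /hh; repeat case: ifP; try split; lia.
Qed.

Lemma pin_arith o t : m %% 2 = 1 -> o < m -> 1 <= t <= hh ->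
  GA o <= t -> GB o <= hh.+1 - t -> o = t.
Proof.
have Hm := m3.
by move=> mo ho ht; rewrite /GA /GB /hh; repeat case: ifP; try split; lia.
Qed.

Lemma pot_inr_ge G i (S C : edge_type e) (w : U) b : C != S ->
  (forall z, z \in val C -> b <= G (off i z)) -> b < pot G i S (inr (C, w)).
Proof.
move=> CS Hb /=; rewrite (negbTE CS).
have := Hb _ (lo_in C); have := Hb _ (lo_in1 C); lia.
Qed.

Lemma GA_S i : i < m -> forall z, z \in val (edg i) -> GA (off i z) = 1.
Proof.
have Hm := m3.
move=> hi z; rewrite in_edg => /orP [] /eqP ->.
  by rewrite off_node0 // ltnW.
by rewrite -addn1 off_node ?modn_small //; lia.
Qed.

Lemma GB_S i : i < m -> forall z, z \in val (edg (i + hh)) -> GB (off i z) = 1.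
Proof.
have Hm := m3.
move=> hi z; rewrite in_edg => /orP [] /eqP ->.
  rewrite off_node ?modn_small /GB /hh; try lia.
  by repeat case: ifP; lia.
rewrite -addnS off_node ?modn_small /GB /hh; try lia.
by repeat case: ifP; lia.
Qed.

Lemma edg_neq i : i < m -> 4 <= m -> edg (i + hh) != edg i.
Proof.
move=> hi m4; apply/negP => /eqP H.
have : node (i + hh) \in val (edg (i + hh)) by rewrite in_edg eqxx.
rewrite H in_edg => /orP [] /eqP /(congr1 (off i)).
  by rewrite off_node0 ?off_node ?modn_small /hh; lia.
by rewrite -addn1 !off_node ?modn_small /hh; lia.
Qed.

Lemma lower_dist k (c : T -> 'I_k) (u : U) :
  rainbow_vertex_coloring E c -> 4 <= m -> hh <= k.
Proof.
move=> rc m4.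
have nS := @edg_neq 0 (m_gt0) m4; rewrite add0n in nS.
have xy : inr (edg 0, u) != inr (edg hh, u) :> T.
  apply/negP => /eqP [] E0; move: nS.
  by rewrite (@edge_eq (edg hh) (edg 0)) ?eqxx //= E0.
have [q /andP [pq uq]] := rc _ _ xy.
have Lp := pot_lip GA_lip (GA_S m_gt0).
have [h1 _] := path_pot Lp pq.
rewrite last_rcons size_rcons in h1.
have Fy : hh < pot GA 0 (edg 0) (inr (edg hh, u)).
  apply: pot_inr_ge nS _ => z; rewrite in_edg => /orP [] /eqP ->.
    rewrite -[hh]add0n off_node // modn_small /GA /hh /=; try lia.
    by repeat case: ifP; lia.
  rewrite -addn1 -[hh]add0n -addnA off_node // modn_small /GA /hh /=; try lia.
  by repeat case: ifP; lia.
have Fx : pot GA 0 (edg 0) (inr (edg 0, u)) = 0 by rewrite /= eqxx.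
have := uniq_size uq; lia.
Qed.

Lemma window (c : T -> 'I_hh) (u : U) i : rainbow_vertex_coloring E c ->
  m %% 2 = 1 -> 4 <= m -> i < m ->
  uniq [seq c (inl (node (i + t.+1))) | t <- iota 0 hh].
Proof.
move=> rc mo m4 hi.
have hi' : i <= m by exact: ltnW.
have nS := edg_neq hi m4.
set x : T := inr (edg i, u); set y : T := inr (edg (i + hh), u).
have xy : x != y.
  apply/negP => /eqP [] E0; move: nS.
  by rewrite (@edge_eq (edg (i + hh)) (edg i)) ?eqxx //= E0.
have [q /andP [pq uq]] := rc _ _ xy.
have LA := pot_lip GA_lip (GA_S hi).
have LB := pot_lip GB_lip (GB_S hi).
have Fy : hh < pot GA i (edg i) y.
  apply: pot_inr_ge nS _ => z; rewrite in_edg => /orP [] /eqP ->.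
    rewrite off_node // modn_small /GA /hh /=; try lia.
    by repeat case: ifP; lia.
  rewrite -addnS off_node // modn_small /GA /hh /=; try lia.
  by repeat case: ifP; lia.
have Fx : pot GA i (edg i) x = 0 by rewrite /= eqxx.
have Gy : pot GB i (edg (i + hh)) y = 0 by rewrite /= eqxx.
have [h1 _] := path_pot LA pq.
rewrite last_rcons size_rcons in h1.
have sq : size q = hh by have := uniq_size uq; lia.
have pin : forall t, t < hh -> nth x q t = inl (node (i + t.+1)).
  move=> t ht.
  have ht' : t < size (rcons q y) by rewrite size_rcons; lia.
  have [a1 _] := path_pot_nth LA pq ht'.
  have [_ b2] := path_pot_nth LB pq ht'.
  rewrite nth_rcons sq ht last_rcons size_rcons sq Fx Gy in a1 b2.
  move: (nth x q t) a1 b2 => v a1 b2.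
  case: v => [z|[C w]] in a1 b2 *.
    rewrite /= in a1 b2.
    have := @pin_arith (off i z) t.+1 mo (off_lt _ _).
    move=> P; rewrite (off_inv hi' (P _ a1 _)) //; lia.
  case: (eqVneq C (edg i)) => [CA|CA].
    subst C.
    have : hh < pot GB i (edg (i + hh)) (inr (edg i, w)).
      apply: pot_inr_ge; first by rewrite eq_sym.
      move=> z; rewrite in_edg => /orP [] /eqP ->.
        rewrite off_node0 // /GB /hh /=.
        by repeat case: ifP; lia.
      rewrite -[i.+1]addn1 off_node // modn_small /GB /hh /=; try lia.
      by repeat case: ifP; lia.
    by move=> HH; have := leq_trans HH b2; lia.
  case: (eqVneq C (edg (i + hh))) => [CB|CB].
    subst C.
    have : hh < pot GA i (edg i) (inr (edg (i + hh), w)).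
      apply: pot_inr_ge => // z; rewrite in_edg => /orP [] /eqP ->.
        rewrite off_node // modn_small /GA /hh /=; try lia.
        by repeat case: ifP; lia.
      rewrite -addnS off_node // modn_small /GA /hh /=; try lia.
      by repeat case: ifP; lia.
    by move=> HH; have := leq_trans HH a1; lia.
  move: a1 b2; rewrite /= (negbTE CA) (negbTE CB).
  have [l1 l2] := Glip_e i GA_lip (cycle_node (lo C)).
  have [l3 l4] := Glip_e i GB_lip (cycle_node (lo C)).
  have s1 := sum_ge mo (off_lt i (node (lo C))).
  have s2 := sum_ge mo (off_lt i (node (lo C).+1)).
  lia.
have Hq : q = [seq inl (node (i + t.+1)) | t <- iota 0 hh].
  apply: (@eq_from_nth _ x); first by rewrite size_map size_iota.
  move=> t ht; rewrite sq in ht.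
  by rewrite (nth_map 0) ?size_iota // nth_iota // add0n pin.
by move: uq; rewrite Hq -map_comp.
Qed.

Lemma map_iotaS (A : Type) (f : nat -> A) n :
  [seq f t | t <- iota 0 n.+1] = f 0 :: [seq f t.+1 | t <- iota 0 n].
Proof. by rewrite /= -[1]/(1 + 0) iotaDl -map_comp. Qed.

Lemma map_iota_rcons (A : Type) (f : nat -> A) n :
  [seq f t | t <- iota 0 n.+1] = rcons [seq f t | t <- iota 0 n] (f n).
Proof. by rewrite -addn1 iotaD map_cat cats1. Qed.

Lemma odd_contra (c : T -> 'I_hh) : m %% 2 = 1 -> 4 <= m ->
  (forall i, i < m -> uniq [seq c (inl (node (i + t.+1))) | t <- iota 0 hh]) -> False.
Proof.
move=> mo m4 H.
pose col j := c (inl (node j)).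
have W : forall s, uniq [seq col (s + t) | t <- iota 0 hh].
  move=> s; have := H ((s + m - 1) %% m) (ltn_pmod _ m_gt0).
  congr (uniq _); apply: eq_map => t; rewrite /col; congr (c (inl _)).
  apply: val_inj => /=; rewrite modnDml.
  have -> : s + m - 1 + t.+1 = s + t + m by lia.
  by rewrite modnDr.
have eh : hh = hh.-1.+1 by rewrite /hh; lia.
have per : forall s, col s = col (s + hh).
  move=> s; apply/eqP; apply: contraT => neq.
  have L1 := W s; have L2 := W s.+1.
  have E1 : iota 0 hh = iota 0 hh.-1.+1 by rewrite -eh.
  rewrite E1 map_iotaS in L1; rewrite E1 map_iota_rcons in L2.
  have EM : [seq col (s.+1 + t) | t <- iota 0 hh.-1] = [seq col (s + t.+1) | t <- iota 0 hh.-1].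
    by apply: eq_map => t; rewrite addSnnS.
  rewrite EM in L2.
  move: L1 L2; set Mid := [seq col (s + t.+1) | t <- iota 0 hh.-1].
  rewrite rcons_uniq /= addn0 (_ : s.+1 + hh.-1 = s + hh); last by rewrite /hh; lia.
  move=> /andP [n1 u1] /andP [n2 _].
  have : uniq (col s :: col (s + hh) :: Mid).
    by rewrite /= in_cons negb_or neq n1 n2 u1.
  move/uniq_ord_size; rewrite /= /Mid size_map size_iota /hh; lia.
have c0 : col 0 = col (hh.*2) by rewrite (per 0) (per (0 + hh)) add0n addnn.
have c1 : col (hh.*2).+1 = col 0.
  rewrite /col; congr (c (inl _)); apply: val_inj => /=.
  by rewrite mod0n (_ : (hh.*2).+1 = m) ?modnn // /hh; lia.
have := W (hh.*2).
rewrite (_ : iota 0 hh = iota 0 hh.-2.+2); last by congr iota; rewrite /hh; lia.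
rewrite !map_iotaS /= in_cons negb_or addn0 addn1 -c0 c1 eqxx.
by [].
Qed.

End Corona.

Theorem theorem6 (m n : nat) (U : finType) (h : rel U) :
  3 <= m -> 2 <= n -> #|U| = n -> simple_graph h -> connected_graph h ->
  is_rvc (edge_corona_rel (cycle_rel m) h)
    (if m == 3 then 1 else (m.+1) %/ 2).
Proof.
move=> m3 n2 cardU [hsym _] _.
split.
  by exists (col0 m3 (U:=U)); exact: upper.
move=> k c rc.
have [u _] : exists u : U, true.
  have : 0 < #|U| by lia.
  by case/card_gt0P => u _; exists u.
case: eqP => [m3e|m3n].
  by have := ltn_ord (c (inl (node m3 0))); case: k c rc.
have m4 : 3 < m by lia.
have d := lower_dist m3 u rc m4.
rewrite /hh in d.
case: (eqVneq (m %% 2) 1) => [mo|me]; last by lia.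
case: (ltnP (m %/ 2) k) => hk; first by lia.
have ek : k = hh m by rewrite /hh; lia.
subst k.
exfalso; apply: (@odd_contra m m3 U c mo m4) => i hi.
have W := @window m m3 U h c u i rc mo m4 hi. exact W.
Qed.
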